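(* Consider the balls-to-bins problem with a fixed family of bijections $f_{p,q}$. Fix a contiguous interval $U$ of the operation sequence (the node $u$), partitioned into consecutive sub-intervals called segments. Let $\mathcal I_1,\mathcal I_2$ be two sequences of insertions during $U$ (preceded by the same fixed operations) that both start at state $(p_{st},q_{st})$ and both end at state $(p_{end},q_{end})$, with $p_{end}-p_{st}=q_{end}-q_{st}$. Let $\mathrm{dist}(\mathcal I_1,\mathcal I_2)$ be the number of balls among $a_{p_{st}+1},\dots,a_{p_{end}},b_{q_{st}+1},\dots,b_{q_{end}}$ that are inserted in different segments under $\mathcal I_1$ and under $\mathcal I_2$. Then $\mathrm{cost}_u(\mathcal I_1)+\mathrm{cost}_u(\mathcal I_2)\ge \tfrac12\,\mathrm{dist}(\mathcal I_1,\mathcal I_2)$.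
   Context: Balls-to-bins problem: the state is $(p,q)$; there are balls $a_1,\dots,a_p,b_1,\dots,b_q$ and bins $1,\dots,p+q$, and the placement is a bijection $f_{p,q}$ from balls to bins depending only on $(p,q)$. An insertion increments $p$ (creating ball $a_{p+1}$) or $q$ (creating ball $b_{q+1}$), together with a new bin, and the placement switches from $f_{p,q}$ to the new bijection. A ball is moved at operation $t$ if it is created at $t$ or its bin changes at $t$. For a sequence $\mathcal I$ and the interval $U$ with segments, $\mathrm{cost}_u(\mathcal I)$ is the number of pairs $(x,t_2)$ such that ball $x$ is moved at operation $t_2$, the previous operation $t_1<t_2$ at which $x$ was moved exists, and $t_1,t_2$ both lie in $U$ but in different segments. *)

(* Defs.v *)
From mathcomp Require Import all_boot.
Set Implicit Arguments. Unset Strict Implicit. Unset Printing Implicit Defensive.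

(* Balls: [inl i] is a_i, [inr j] is b_j (indices start at 1). Bins are nats. *)
Definition ball := (nat + nat)%type.

Definition ball_in (s : nat * nat) (x : ball) : bool :=
  match x with inl i => (0 < i <= s.1) | inr j => (0 < j <= s.2) end.

(* f p q x : bin of ball x under the placement f_{p,q}. *)
Definition placement := nat -> nat -> ball -> nat.

Definition bijective_family (f : placement) : Prop :=
  forall p q,
    (forall x y, ball_in (p, q) x -> ball_in (p, q) y -> f p q x = f p q y -> x = y)
 /\ (forall x, ball_in (p, q) x -> 0 < f p q x <= p + q)
 /\ (forall b, 0 < b <= p + q -> exists2 x, ball_in (p, q) x & f p q x = b).

(* An operation sequence: [true] inserts a new a-ball (p+1), [false] a new b-ball.
   Operations are numbered 0,1,2,...; the state starts at (0,0), and
   [state ops t] is the state before operation t (after the first t operations). *)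
Definition state (ops : seq bool) (t : nat) : nat * nat :=
  (count id (take t ops), count negb (take t ops)).

Definition moved (f : placement) (ops : seq bool) (x : ball) (t : nat) : bool :=
  let s := state ops t in let s' := state ops t.+1 in
  (ball_in s' x && ~~ ball_in s x) || (ball_in s x && (f s.1 s.2 x != f s'.1 s'.2 x)).

Definition all_balls (s : nat * nat) : seq ball :=
  [seq inl i | i <- iota 1 s.1] ++ [seq inr j | j <- iota 1 s.2].

(* U = operations lo, ..., hi-1; seg t = label of the segment containing t.
   (x,t2) is counted iff x is moved at t2 in U, the previous move t1 < t2 of x
   exists, lies in U (lo <= t1), and seg t1 <> seg t2. *)
Definition counted (f : placement) (seg : nat -> nat) (lo : nat)
    (ops : seq bool) (x : ball) (t2 : nat) : bool :=
  moved f ops x t2 &&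
  has (fun t1 => [&& moved f ops x t1, seg t1 != seg t2 &
                     all (fun t => ~~ moved f ops x t) (iota t1.+1 (t2 - t1.+1))])
      (iota lo (t2 - lo)).

Definition cost_u (f : placement) (seg : nat -> nat) (lo hi : nat) (ops : seq bool) : nat :=
  \sum_(lo <= t2 < hi) count (fun x => counted f seg lo ops x t2) (all_balls (state ops hi)).

Definition ctime (ops : seq bool) (x : ball) : nat :=
  find (fun t => ball_in (state ops t.+1) x) (iota 0 (size ops)).

Definition new_balls (pst qst pend qend : nat) : seq ball :=
  [seq inl i | i <- iota pst.+1 (pend - pst)] ++ [seq inr j | j <- iota qst.+1 (qend - qst)].

Definition dist (seg : nat -> nat) (ops1 ops2 : seq bool) (pst qst pend qend : nat) : nat :=
  count (fun x => seg (ctime ops1 x) != seg (ctime ops2 x)) (new_balls pst qst pend qend).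

(* Main.v *)
Require Import Defs.
From mathcomp Require Import all_boot.
From mathcomp Require Import zify.
Set Implicit Arguments. Unset Strict Implicit. Unset Printing Implicit Defensive.

Definition bin (f : placement) (ops : seq bool) t (u : ball) :=
  f (state ops t).1 (state ops t).2 u.

Lemma state_mono ops t t' : t <= t' ->
  (state ops t).1 <= (state ops t').1 /\ (state ops t).2 <= (state ops t').2.
Proof.
move=> le; rewrite /state /= -(subnKC le) takeD !count_cat; split; lia.
Qed.

Lemma ball_in_mono ops t t' u : t <= t' -> ball_in (state ops t) u -> ball_in (state ops t') u.
Proof.
move=> le; have [h1 h2] := state_mono ops le.
move: h1 h2; rewrite /state /=; case: u => i /= h1 h2 /andP [a b]; apply/andP; split => //; lia.
Qed.

Lemma state_sum ops t : t <= size ops -> (state ops t).1 + (state ops t).2 = t.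
Proof.
move=> le; rewrite /state /=.
have := count_predC id (take t ops); rewrite size_take.
have -> : count (predC id) (take t ops) = count negb (take t ops) by apply: eq_count.
by case: ltnP => h //; lia.
Qed.

Lemma mem_all_balls s x : (x \in all_balls s) = ball_in s x.
Proof.
case: x => i; rewrite /all_balls mem_cat /=.
- rewrite mem_map; last by move=> ? ? [].
  have -> : (inl i \in [seq inr j | j <- iota 1 s.2]) = false.
    by apply/negbTE/negP => /mapP [].
  rewrite mem_iota orbF; apply/idP/idP; lia.
- rewrite (mem_map (f := inr)); last by move=> ? ? [].
  have -> : (inr i \in [seq inl j | j <- iota 1 s.1]) = false.
    by apply/negbTE/negP => /mapP [].
  rewrite mem_iota; apply/idP/idP; lia.
Qed.

Lemma size_all_balls s : size (all_balls s) = s.1 + s.2.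
Proof. by rewrite size_cat !size_map !size_iota. Qed.

Lemma moved_in f ops u t : ball_in (state ops t) u ->
  moved f ops u t = (bin f ops t u != bin f ops t.+1 u).
Proof. by move=> h; rewrite /moved h /= andbF. Qed.

Lemma no_move_const f ops u a b : a <= b -> ball_in (state ops a) u ->
  (forall t, a <= t < b -> ~~ moved f ops u t) -> bin f ops b u = bin f ops a u.
Proof.
move=> le hin hn; elim: b le hn => [|b IH] le hn.
  by have -> : a = 0 by lia.
case: (ltnP a b.+1) => h; last by have -> : a = b.+1 by lia.
have hb : a <= b by lia.
rewrite -IH //; last by move=> t ht; apply: hn; lia.
have := hn b; rewrite moved_in; last exact: ball_in_mono hin.
by move=> /(_ ltac:(lia)); rewrite negbK => /eqP.
Qed.

Lemma creation f ops u a b : a <= b -> ~~ ball_in (state ops a) u -> ball_in (state ops b) u ->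
  exists2 t, a <= t < b & moved f ops u t.
Proof.
move=> le hn; elim: b le => [|b IH] le hb.
  have ea : a = 0 by lia.
  by move: hn; rewrite ea hb.
case: (ltnP a b.+1) => h; last first.
  have ea : a = b.+1 by lia.
  by move: hn; rewrite ea hb.
case hbb: (ball_in (state ops b) u).
  by case: (IH ltac:(lia) hbb) => t ht hm; exists t => //; lia.
by exists b; [lia | rewrite /moved hb hbb].
Qed.

Lemma last_move (P : nat -> bool) lo T : (exists2 t, lo <= t < T & P t) ->
  exists t1, [/\ lo <= t1 < T, P t1 & forall t, t1 < t < T -> ~~ P t].
Proof.
elim: T => [|T IH] [t ht hp]; first lia.
case hT: (P T).
  exists T; split; [lia | done | move=> s hs; lia].
case: (IH _) => [|t1 [h1 h2 h3]].
  exists t => //; case: (ltnP t T) => h; first lia.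
  have et : t = T by lia.
  by move: hp; rewrite et hT.
exists t1; split; [lia | done |].
move=> s hs; case: (ltnP s T) => h; first by apply: h3; lia.
have -> : s = T by lia.
by rewrite hT.
Qed.

Lemma first_move (P : nat -> bool) T hi : (exists2 t, T <= t < hi & P t) ->
  exists t2, [/\ T <= t2 < hi, P t2 & forall t, T <= t < t2 -> ~~ P t].
Proof.
move=> hex.
have ex : exists n, (T <= n < hi) && P n by case: hex => t h1 h2; exists t; rewrite h1 h2.
case: (ex_minnP ex) => t2 /andP [h1 h2] hmin; exists t2; split => //.
move=> t ht; apply/negP => hp.
have := hmin t; rewrite hp andbT; move=> /(_ ltac:(lia)); lia.
Qed.

Definition binv (f : placement) (s : nat * nat) b :=
  nth (inl 0) (all_balls s) (find (fun z => f s.1 s.2 z == b) (all_balls s)).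

Lemma binvP f s b : (exists2 z, ball_in s z & f s.1 s.2 z = b) ->
  ball_in s (binv f s b) /\ f s.1 s.2 (binv f s b) = b.
Proof.
move=> [z hz hb].
have hh : has (fun z => f s.1 s.2 z == b) (all_balls s).
  by apply/hasP; exists z; [rewrite mem_all_balls | apply/eqP].
split; last by apply/eqP; apply: (nth_find (inl 0) hh).
by rewrite -mem_all_balls /binv mem_nth // -has_find.
Qed.

Lemma state0 ops : state ops 0 = (0,0).
Proof. by rewrite /state take0. Qed.

Lemma ctimeP ops x t : ball_in (state ops (size ops)) x -> t <= size ops ->
  (ctime ops x < t) = ball_in (state ops t) x.
Proof.
move=> hend ht.
set P := fun t => ball_in (state ops t.+1) x.
have Pmono : forall a b, a <= b -> P a -> P b.
  by move=> a b hab; apply: ball_in_mono.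
have n0 : 0 < size ops.
  case: (posnP (size ops)) => // e; move: hend; rewrite e state0 /=; case: (x) => ? /=; lia.
have hh : has P (iota 0 (size ops)).
  apply/hasP; exists (size ops).-1; first by rewrite mem_iota; lia.
  by rewrite /P prednK.
have hc : ctime ops x < size ops by rewrite /ctime -[X in _ < X](size_iota 0) -has_find.
case: t ht => [|t] ht; first by rewrite state0 /=; case: (x) => ? /=; lia.
rewrite ltnS; apply/idP/idP => h.
- have := nth_find 0 hh; rewrite nth_iota // add0n -/(ctime ops x) => hp.
  exact: (Pmono _ _ h hp).
- case: (leqP (ctime ops x) t) => // hlt.
  have := before_find 0 hlt; rewrite nth_iota; last lia.
  by rewrite add0n /P h.
Qed.

Lemma seg_boundary (seg : nat -> nat) a b : a < b -> seg a != seg b ->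
  exists T, [/\ a < T, T <= b & seg T.-1 != seg T].
Proof.
elim: b => [|b IH] hab hs; first lia.
case: (eqVneq (seg b) (seg b.+1)) => e.
- have hab' : a < b.
    case: (ltnP a b) => // h; have eb : a = b by lia.
    by move: hs; rewrite eb e eqxx.
  case: (IH hab'); first by rewrite e.
  move=> T [h1 h2 h3]; exists T; split => //; lia.
- by exists b.+1; split => //; lia.
Qed.

Lemma mem_new_balls pst qst pend qend x : pst <= pend -> qst <= qend ->
  x \in new_balls pst qst pend qend -> ball_in (pend,qend) x && ~~ ball_in (pst,qst) x.
Proof.
move=> h1 h2; rewrite /new_balls mem_cat => /orP [] /mapP [i]; rewrite mem_iota => hi -> /=; lia.
Qed.

Lemma uniq_new_balls pst qst pend qend : uniq (new_balls pst qst pend qend).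
Proof.
rewrite /new_balls cat_uniq !map_inj_uniq ?iota_uniq //=; try by move=> ? ? [].
rewrite andbT; apply/hasP => [[x /mapP [j _ ->] /mapP [i _]]] //.
Qed.

Lemma counted_intro f seg lo ops x t1 T t2 :
  lo <= t1 -> t1 < T -> T <= t2 -> moved f ops x t1 -> moved f ops x t2 ->
  (forall t, t1 < t < T -> ~~ moved f ops x t) ->
  (forall t, T <= t < t2 -> ~~ moved f ops x t) ->
  seg t1 != seg t2 -> counted f seg lo ops x t2.
Proof.
move=> h1 h2 h3 m1 m2 n1 n2 hs; rewrite /counted m2 /=.
apply/hasP; exists t1; first by rewrite mem_iota; lia.
rewrite m1 hs /=; apply/allP => t; rewrite mem_iota => ht.
case: (ltnP t T) => h; [apply: n1 | apply: n2]; lia.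
Qed.

Definition pairs f seg lo hi ops :=
  [seq (x, t) | t <- iota lo (hi - lo),
                x <- [seq y <- all_balls (state ops hi) | counted f seg lo ops y t]].

Lemma size_pairs f seg lo hi ops : size (pairs f seg lo hi ops) = cost_u f seg lo hi ops.
Proof.
rewrite /pairs size_allpairs_dep sumnE big_map /cost_u /index_iota.
by apply: eq_bigr => t _; rewrite size_filter.
Qed.

Lemma mem_pairs f seg lo hi ops x t : lo <= t < hi -> ball_in (state ops hi) x ->
  counted f seg lo ops x t -> (x, t) \in pairs f seg lo hi ops.
Proof.
move=> ht hx hc; apply/allpairsPdep; exists t, x; split => //.
  by rewrite mem_iota; lia.
by rewrite mem_filter hc mem_all_balls.
Qed.

Fixpoint back (f : placement) (s0 s1 : nat * nat) n w :=
  match n with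
  | 0 => w
  | n'.+1 => if ball_in s0 w then back f s0 s1 n' (binv f s1 (f s0.1 s0.2 w)) else w
  end.

Definition Hmap (f : placement) (opsB : seq bool) (s0 s1 : nat * nat)
    (p : (ball * nat) + (ball * nat)) : ball :=
  match p with
  | inl (v, _) => if ball_in s0 v then back f s0 s1 (s1.1 + s1.2) (binv f s1 (f s0.1 s0.2 v)) else v
  | inr (v, t) => back f s0 s1 (s1.1 + s1.2) (binv f s1 (bin f opsB t v))
  end.

Section Chain.
Variables (f : placement) (opsA opsB : seq bool) (seg : nat -> nat).
Variables (lo T hi pst qst pend qend : nat) (x : ball).
Hypothesis bij : bijective_family f.
Hypothesis loT : lo < T.
Hypothesis Thi : T < hi.
Hypothesis szA : size opsA = hi.
Hypothesis szB : size opsB = hi.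
Hypothesis loA : state opsA lo = (pst, qst).
Hypothesis loB : state opsB lo = (pst, qst).
Hypothesis hiA : state opsA hi = (pend, qend).
Hypothesis hiB : state opsB hi = (pend, qend).
Hypothesis hseg : forall t1 t2, lo <= t1 -> t1 < T -> T <= t2 -> t2 < hi -> seg t1 != seg t2.
Hypothesis xA : ball_in (state opsA T) x.
Hypothesis xB : ~~ ball_in (state opsB T) x.
Hypothesis xnew : ~~ ball_in (pst, qst) x.

Let s0 := (pst, qst).
Let s1 := (pend, qend).
Let N := pend + qend.
Let g := f pend qend.
Let P' := map inl (pairs f seg lo hi opsA) ++ map inr (pairs f seg lo hi opsB).
Let found := exists2 p, p \in P' & x = Hmap f opsB s0 s1 p.

Let anch ops u := has (moved f ops u) (iota lo (T - lo)).
Let movesl ops u := has (moved f ops u) (iota T (hi - T)).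

Lemma inj_at s u v : ball_in s u -> ball_in s v -> f s.1 s.2 u = f s.1 s.2 v -> u = v.
Proof. by case: s u v => p q u v; apply: (bij p q).1. Qed.

Lemma to_end ops u : size ops = hi -> state ops hi = (pend, qend) ->
  ball_in (state ops T) u -> ball_in (pend, qend) u.
Proof. by move=> _ <-; apply: ball_in_mono; lia. Qed.

Lemma ginvK u : ball_in (pend, qend) u -> binv f s1 (g u) = u.
Proof.
move=> hu; have [h1 h2] := @binvP f s1 (g u) (ex_intro2 _ _ u hu erefl).
exact: (inj_at h1 hu h2).
Qed.

Lemma frozen ops u : state ops hi = (pend, qend) -> ball_in (state ops T) u ->
  ~~ movesl ops u -> bin f ops T u = g u.
Proof.
move=> he hu hm; rewrite -(@no_move_const f ops u T hi) //; first by rewrite /bin he.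
  lia.
move=> t ht; apply/negP => hmt; move/hasP: hm; apply; exists t => //; rewrite mem_iota; lia.
Qed.

Lemma unanch ops u : state ops lo = (pst, qst) -> ball_in (state ops T) u ->
  ~~ anch ops u -> ball_in (pst, qst) u /\ bin f ops T u = f pst qst u.
Proof.
move=> hl hu ha.
have nm : forall t, lo <= t < T -> ~~ moved f ops u t.
  move=> t ht; apply/negP => hmt; move/hasP: ha; apply; exists t => //; rewrite mem_iota; lia.
have hlo : ball_in (state ops lo) u.
  apply/negPn/negP => hn; have [t ht hm] := creation f (ltnW loT) hn hu.
  by move: (nm t ht); rewrite hm.
split; first by rewrite -hl.
by rewrite (@no_move_const f ops u lo T) ?(ltnW loT) // /bin hl.
Qed.

Lemma pair_from ops u : size ops = hi -> state ops hi = (pend, qend) ->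
  ball_in (state ops T) u -> anch ops u -> movesl ops u ->
  exists t2, [/\ (u, t2) \in pairs f seg lo hi ops,
                 bin f ops t2 u = bin f ops T u & T <= t2].
Proof.
move=> hs he hu ha hm.
have [t1 [h1 m1 n1]] : exists t1, [/\ lo <= t1 < T, moved f ops u t1 &
                         forall t, t1 < t < T -> ~~ moved f ops u t].
  apply: last_move; case/hasP: ha => t; rewrite mem_iota => ht hmt; exists t => //; lia.
have [t2 [h2 m2 n2]] : exists t2, [/\ T <= t2 < hi, moved f ops u t2 &
                         forall t, T <= t < t2 -> ~~ moved f ops u t].
  apply: first_move; case/hasP: hm => t; rewrite mem_iota => ht hmt; exists t => //; lia.
exists t2; split; last lia.
- apply: mem_pairs; first lia.
    by rewrite he; apply: (to_end hs he hu).
  apply: (@counted_intro _ _ _ _ _ t1 T); try lia; try done.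
  apply: hseg; lia.
- by apply: no_move_const => //; lia.
Qed.


Let sig u := binv f (state opsB T) (g u).
Let c j := iter j sig x.

Let Inv j := [/\ ball_in (state opsA T) (c j), ~~ movesl opsA (c j), anch opsA (c j) &
   (0 < j -> [/\ ball_in s0 (c j), f pst qst (c j) = g (c j.-1) & ~~ anch opsB (c j)])].

Lemma inv_end j : Inv j -> ball_in (pend, qend) (c j).
Proof. by case=> h _ _ _; apply: (to_end szA hiA h). Qed.

Lemma back_c j n : j <= n -> (forall i, i <= j -> Inv i) -> back f s0 s1 n (c j) = x.
Proof.
elim: j n => [|j IH] n hjn hI.
  by case: n {hjn} => [|n] //=; rewrite (negbTE xnew).
case: n hjn => [|n] hjn //.
have [_ _ _ /(_ erefl) [ho hp _]] := hI j.+1 (leqnn _).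
rewrite /= -/(c j.+1) ho /= -/(c j) hp ginvK; last by apply: inv_end; apply: hI.
by apply: IH => // i hii; apply: hI; lia.
Qed.

Lemma sumT ops : size ops = hi -> (state ops T).1 + (state ops T).2 = T.
Proof. by move=> h; apply: state_sum; lia. Qed.

Lemma step j : j <= N -> (forall i, i <= j -> Inv i) -> found \/ Inv j.+1.
Proof.
move=> hjN hI; have [uA ufz uanch uold] := hI j (leqnn _).
set u := c j in uA ufz uanch uold.
have hbu : bin f opsA T u = g u := frozen hiA uA ufz.
have hrange : 0 < g u <= (state opsB T).1 + (state opsB T).2.
  rewrite sumT // -(sumT szA) -hbu; exact: (bij _ _).2.1 _ uA.
have [zB zb] : ball_in (state opsB T) (c j.+1) /\ bin f opsB T (c j.+1) = g u.
  apply: binvP; have [z hz hzb] := (bij _ _).2.2 _ hrange; by exists z.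
set z := c j.+1 in zB zb.
have uend : ball_in (pend, qend) u by apply: inv_end; apply: hI.
have zend : ball_in (pend, qend) z by apply: (to_end szB hiB zB).
case hzanch: (anch opsB z).
  have zu : z != u.
    apply/negP => /eqP ezu; case: (posnP j) => hj.
      have ux : u = x by rewrite /u hj.
      by move: xB; rewrite -ux -ezu zB.
    by have [_ _ ] := uold hj; rewrite -ezu hzanch.
  have hzm : movesl opsB z.
    apply/negPn/negP => hn; have := frozen hiB zB hn; rewrite zb => e.
    by move/negP: zu; apply; apply/eqP; apply: (inj_at zend uend); rewrite -/g e.
  have [t2 [hp hb _]] := pair_from szB hiB zB hzanch hzm.
  left; exists (inr (z, t2)).
    by rewrite mem_cat; apply/orP; right; apply: map_f.
  by rewrite /= hb zb ginvK // back_c.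
have [zold zpre] := unanch loB zB (negbT hzanch).
have zA : ball_in (state opsA T) z by rewrite -loA in zold; apply: ball_in_mono zold; lia.
have hzanchA : anch opsA z.
  apply/negPn/negP => hn; have [_ e] := unanch loA zA hn.
  have ezu : z = u by apply: (inj_at zA uA); rewrite -/(bin f opsA T z) -/(bin f opsA T u) e -zpre zb hbu.
  by move: hn; rewrite ezu uanch.
case hzm : (movesl opsA z).
  have [t2 [hp _ _]] := pair_from szA hiA zA hzanchA hzm.
  left; exists (inl (z, t2)).
    by rewrite mem_cat; apply/orP; left; apply: map_f.
  rewrite /= zold.
  have -> : f pst qst z = g u by exact: (etrans (esym zpre) zb).
  by rewrite ginvK // back_c.
right; split => //; first by rewrite hzm.
by move=> _; split => //; [exact: (etrans (esym zpre) zb) | rewrite hzanch].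
Qed.


Lemma base : found \/ Inv 0.
Proof.
have xanch : anch opsA x.
  have hn : ~~ ball_in (state opsA lo) x by rewrite loA.
  have [t ht hm] := creation f (ltnW loT) hn xA.
  by apply/hasP; exists t => //; rewrite mem_iota; lia.
case hm : (movesl opsA x).
  have [t2 [hp _ _]] := pair_from szA hiA xA xanch hm.
  left; exists (inl (x, t2)).
    by rewrite mem_cat; apply/orP; left; apply: map_f.
  by rewrite /= (negbTE xnew).
by right; split => //; rewrite hm.
Qed.

Lemma cinj : (forall i, i <= N.+1 -> Inv i) ->
  forall i j, i < j -> j <= N.+1 -> c i != c j.
Proof.
move=> hI; elim=> [|i IH] j hij hj.
  have [_ _ _ /(_ hij) [ho _ _]] := hI j hj.
  apply/negP => /eqP e; move: xnew; have -> : x = c 0 by [].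
  by rewrite e ho.
have [_ _ _ /(_ erefl) [_ h1 _]] := hI i.+1 ltac:(lia).
have [_ _ _ /(_ ltac:(lia)) [_ h2 _]] := hI j hj.
apply/negP => /eqP e.
have e2 : c i = c j.-1.
  apply: (inj_at (s := (pend, qend))); try (apply: inv_end; apply: hI; lia).
  by rewrite /= -/g -h1 -h2 e.
by move/negP: (IH j.-1 ltac:(lia) ltac:(lia)); apply; apply/eqP.
Qed.

Lemma chain_found : found.
Proof.
have H : forall k, k <= N.+1 -> found \/ (forall i, i <= k -> Inv i).
  elim=> [|k IH] hk.
    case: base => [h|h]; [by left | right => i hi0].
    by have -> : i = 0 by lia.
  case: (IH ltac:(lia)) => [h|h]; first by left.
  have hkN : k <= N by lia.
  case: (step hkN h) => [h'|h']; first by left.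
  right => i hik; case: (ltnP i k.+1) => hh; first by apply: h; lia.
  by have -> : i = k.+1 by lia.
case: (H N.+1 (leqnn _)) => // hI; exfalso.
have hu : uniq (map c (iota 0 N.+2)).
  rewrite map_inj_in_uniq ?iota_uniq // => i j; rewrite !mem_iota => hi0 hj0 e.
  case: (ltngtP i j) => // hij.
  - by move/negP: (cinj hI hij ltac:(lia)); rewrite e.
  - by move/negP: (cinj hI hij ltac:(lia)); rewrite e.
have hs : {subset map c (iota 0 N.+2) <= all_balls (pend, qend)}.
  move=> y /mapP [i]; rewrite mem_iota => hi0 ->; rewrite mem_all_balls.
  by apply: inv_end; apply: hI; lia.
have := uniq_leq_size hu hs; rewrite size_map size_iota size_all_balls /= -/N; lia.
Qed.
End Chain.

Lemma side (f : placement) (pre IA IB : seq bool) (seg : nat -> nat)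
    (pst qst pend qend : nat) :
  bijective_family f ->
  count id pre = pst -> count negb pre = qst ->
  pst + count id IA = pend -> qst + count negb IA = qend ->
  pst + count id IB = pend -> qst + count negb IB = qend ->
  size IB = size IA ->
  (forall t1 t2, size pre <= t1 -> t1 <= t2 -> t2 < size pre + size IA ->
     seg t1 <= seg t2) ->
  count (fun x => seg (ctime (pre ++ IA) x) < seg (ctime (pre ++ IB) x))
        (new_balls pst qst pend qend) <=
  cost_u f seg (size pre) (size pre + size IA) (pre ++ IA)
  + cost_u f seg (size pre) (size pre + size IB) (pre ++ IB).
Proof.
move=> bij hp hq hpA hqA hpB hqB hsz hmono.
set lo := size pre; set hi := lo + size IA.
rewrite hsz -/hi.
set opsA := pre ++ IA; set opsB := pre ++ IB.
have szA : size opsA = hi by rewrite size_cat.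
have szB : size opsB = hi by rewrite size_cat hsz.
have loA : state opsA lo = (pst, qst) by rewrite /state take_size_cat // hp hq.
have loB : state opsB lo = (pst, qst) by rewrite /state take_size_cat // hp hq.
have hiA : state opsA hi = (pend, qend).
  by rewrite /state -szA take_size !count_cat hp hq hpA hqA.
have hiB : state opsB hi = (pend, qend).
  by rewrite /state -szB take_size !count_cat hp hq hpB hqB.
have ppe : pst <= pend by lia.
have qqe : qst <= qend by lia.
rewrite -size_filter -!size_pairs.
set P' := map inl (pairs f seg lo hi opsA) ++ map inr (pairs f seg lo hi opsB).
have -> : size (pairs f seg lo hi opsA) + size (pairs f seg lo hi opsB) =
          size (map (Hmap f opsB (pst, qst) (pend, qend)) P').
  by rewrite size_map size_cat !size_map.
apply: uniq_leq_size; first by rewrite filter_uniq // uniq_new_balls.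
move=> x; rewrite mem_filter => /andP [hlt /(mem_new_balls ppe qqe) /andP [xend xnew]].
have eA : forall t, t <= hi -> (ctime opsA x < t) = ball_in (state opsA t) x.
  by move=> t ht; apply: ctimeP; rewrite ?szA // hiA.
have eB : forall t, t <= hi -> (ctime opsB x < t) = ball_in (state opsB t) x.
  by move=> t ht; apply: ctimeP; rewrite ?szB // hiB.
set cA := ctime opsA x in hlt eA; set cB := ctime opsB x in hlt eB.
have cAlo : lo <= cA.
  by case: (leqP lo cA) => // h; move: xnew; rewrite -loA -eA // /hi; lia.
have cBlo : lo <= cB.
  by case: (leqP lo cB) => // h; move: xnew; rewrite -loB -eB // /hi; lia.
have cBhi : cB < hi by rewrite eB // hiB.
have cAhi : cA < hi by rewrite eA // hiA.
have cAB : cA < cB.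
  case: (ltnP cA cB) => // h.
  have := hmono cB cA cBlo h ltac:(rewrite /hi /lo in cAhi *; lia); lia.
have [T [h1 h2 h3]] := @seg_boundary seg cA cB cAB ltac:(by rewrite neq_ltn hlt) .
have hseg : forall t1 t2, lo <= t1 -> t1 < T -> T <= t2 -> t2 < hi -> seg t1 != seg t2.
  move=> t1 t2 a b c d.
  have m1 := hmono t1 T.-1 a ltac:(lia) ltac:(rewrite /hi /lo in d *; lia).
  have m2 := hmono T.-1 T ltac:(lia) ltac:(lia) ltac:(rewrite /hi /lo in d *; lia).
  have m3 := hmono T t2 ltac:(lia) c ltac:(rewrite /hi /lo in d *; lia).
  rewrite neq_ltn; apply/orP; left; move: h3; rewrite neq_ltn; lia.
have [p hpP hx] := @chain_found f opsA opsB seg lo T hi pst qst pend qend x bij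
  ltac:(lia) ltac:(lia) szA szB loA loB hiA hiB hseg
  ltac:(rewrite -eA; lia) ltac:(rewrite -eB; lia) xnew.
by apply/mapP; exists p.
Qed.
Unset Implicit Arguments.

Theorem mainTheorem11 (f : placement) (pre I1 I2 : seq bool) (seg : nat -> nat)
    (pst qst pend qend : nat) :
  bijective_family f ->
  count id pre = pst -> count negb pre = qst ->
  pst + count id I1 = pend -> qst + count negb I1 = qend ->
  pst + count id I2 = pend -> qst + count negb I2 = qend ->
  pend - pst = qend - qst ->
  (forall t1 t2, size pre <= t1 -> t1 <= t2 -> t2 < size pre + size I1 ->
     seg t1 <= seg t2) ->
  dist seg (pre ++ I1) (pre ++ I2) pst qst pend qend <=
  2 * (cost_u f seg (size pre) (size pre + size I1) (pre ++ I1)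
       + cost_u f seg (size pre) (size pre + size I2) (pre ++ I2)).
Proof.
move=> bij hp hq h1 h2 h3 h4 _ hmono.
have sz : size I2 = size I1.
  have e1 := count_predC id I1; have e2 := count_predC id I2.
  have c1 : count (predC id) I1 = count negb I1 by apply: eq_count.
  have c2 : count (predC id) I2 = count negb I2 by apply: eq_count.
  lia.
have hmono2 : forall t1 t2, size pre <= t1 -> t1 <= t2 -> t2 < size pre + size I2 ->
     seg t1 <= seg t2 by rewrite sz.
have s1 := side bij hp hq h1 h2 h3 h4 sz hmono.
have s2 := side bij hp hq h3 h4 h1 h2 (esym sz) hmono2.
set A := count _ _ in s1; set B := count _ _ in s2.
have : dist seg (pre ++ I1) (pre ++ I2) pst qst pend qend <= A + B.
  rewrite /dist /A /B -count_predUI; apply: leq_trans (leq_addr _ _).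
  apply: sub_count => x /=; rewrite neq_ltn.
  by case/orP => ->; rewrite ?orbT.
lia.
Qed.
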